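(* Let $A$ and $B$ be self-adjoint operators on the same complex Hilbert space, with $B$ bounded, non-negative and $B \neq 0$. Then the set $\mathbb{R}\setminus\bigcup_{t\in\mathbb{R}}\sigma(A+tB)$ is at most countable.
   Context: $\sigma(T)$ denotes the spectrum of an operator $T$. $A$ may be unbounded; $A+tB$ is defined on the domain of $A$. *)

(* Defs.v *)
From HB Require Import structures.
From mathcomp Require Import all_boot all_order all_algebra.
From mathcomp Require Import complex.
From mathcomp Require Import boolp classical_sets cardinality reals.
Set Implicit Arguments. Unset Strict Implicit. Unset Printing Implicit Defensive.
Import Order.TTheory GRing.Theory Num.Theory.
Local Open Scope ring_scope.
Local Open Scope classical_set_scope.

Section Hilbert.
Variables (R : realType) (H : lmodType R[i]) (ip : H -> H -> R[i]).

Definition hnorm (x : H) : R := Num.sqrt (complex.Re (ip x x)).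

Definition hilbert_space : Prop :=
  [/\ (forall (a : R[i]) (x y z : H), ip (a *: x + y) z = a * ip x z + ip y z),
      (forall x y : H, ip y x = Num.conj (ip x y)),
      (forall x : H, 0 <= ip x x),
      (forall x : H, ip x x = 0 -> x = 0) &
      (forall u : nat -> H,
         (forall e : R, 0 < e -> exists N : nat, forall m n : nat,
             (N <= m)%N -> (N <= n)%N -> hnorm (u m - u n) < e) ->
         exists l : H, forall e : R, 0 < e -> exists N : nat, forall n : nat,
             (N <= n)%N -> hnorm (u n - l) < e)].

Definition linear_on (D : set H) (T : H -> H) : Prop :=
  [/\ D 0,
      (forall (a : R[i]) (x y : H), D x -> D y -> D (a *: x + y)) &
      (forall (a : R[i]) (x y : H), D x -> D y -> T (a *: x + y) = a *: T x + T y)].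

Definition dense (D : set H) : Prop :=
  forall (x : H) (e : R), 0 < e -> exists2 y, D y & hnorm (x - y) < e.

(* (possibly unbounded) self-adjoint operator T with domain D:
   densely defined, linear, and T^* = T including equality of domains, i.e.
   y is in dom(T^* ) with T^* y = z  iff  y \in D and z = T y. *)
Definition selfadjoint (D : set H) (T : H -> H) : Prop :=
  [/\ linear_on D T, dense D &
      (forall y z : H, (forall x, D x -> ip (T x) y = ip x z) <-> (D y /\ z = T y))].

Definition bounded_op (T : H -> H) : Prop :=
  linear_on setT T /\ exists C : R, forall x, hnorm (T x) <= C * hnorm x.

Definition nonneg_op (T : H -> H) : Prop := forall x, 0 <= ip (T x) x.

(* lam belongs to the spectrum of the operator T with domain D iff
   T - lam is not boundedly invertible, i.e. there is no bounded
   everywhere-defined S mapping H into D with (T - lam) S = id_H and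
   S (T - lam) = id_D. *)
Definition spectrum (D : set H) (T : H -> H) : set R[i] :=
  [set lam | ~ exists S : H -> H,
      [/\ bounded_op S, (forall y, D (S y)),
          (forall y, T (S y) - lam *: S y = y) &
          (forall x, D x -> S (T x - lam *: x) = x)]].

End Hilbert.

(* Main.v *)
Require Import Defs.
From HB Require Import structures.
From mathcomp Require Import all_boot all_order all_algebra.
From mathcomp Require Import complex.
From mathcomp Require Import boolp classical_sets cardinality reals.
From mathcomp Require Import ring lra.
Import Order.TTheory GRing.Theory Num.Theory.
Local Open Scope ring_scope.
Local Open Scope classical_set_scope.
Local Open Scope complex_scope.
Local Open Scope ring_scope.

Section Basics.
Variables (R : realType) (H : lmodType R[i]) (ip : H -> H -> R[i]).
Hypothesis ip_lin : forall (a : R[i]) (x y z : H), ip (a *: x + y) z = a * ip x z + ip y z.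
Hypothesis ip_sym : forall x y : H, ip y x = Num.conj (ip x y).
Hypothesis ip_pos : forall x : H, 0 <= ip x x.
Hypothesis ip_def : forall x : H, ip x x = 0 -> x = 0.

Definition g (x y : H) : R := complex.Re (ip x y).
Local Notation "r .* x" := ((r%:C) *: x) (at level 40).

Lemma ReM_real (r : R) (z : R[i]) : complex.Re (r%:C * z) = r * complex.Re z.
Proof. case: z => a b /=. rewrite /real_complex_def /=. ring. Qed.

Lemma Re_conj (z : R[i]) : complex.Re (Num.conj z) = complex.Re z.
Proof. case: z => a b. done. Qed.

Lemma ip_add x y z : ip (x + y) z = ip x z + ip y z.
Proof. by rewrite -{1}(scale1r x) ip_lin mul1r. Qed.

Lemma ReD (a b : R[i]) : complex.Re (a + b) = complex.Re a + complex.Re b.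
Proof. by case: a; case: b. Qed.

Lemma g_addl x y z : g (x + y) z = g x z + g y z.
Proof. by rewrite /g ip_add ReD. Qed.

Lemma ip0l z : ip 0 z = 0.
Proof.
have h := ip_add 0 0 z; rewrite addr0 in h.
by apply: (@addrI _ (ip 0 z)); rewrite addr0 -h.
Qed.

Lemma g_scalel r x z : g (r .* x) z = r * g x z.
Proof. by rewrite /g -[r .* x]addr0 ip_lin ip0l addr0 ReM_real. Qed.

Lemma g_sym x y : g x y = g y x.
Proof. by rewrite /g ip_sym Re_conj. Qed.

Lemma g_ge0 x : 0 <= g x x.
Proof. by have := ip_pos x; rewrite lecE => /andP[_]. Qed.

Lemma g_eq0 x : g x x = 0 -> x = 0.
Proof.
move=> h; apply: ip_def.
have := ip_pos x; rewrite lecE /= => /andP[/eqP hi _].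
move: h; rewrite /g; case: (ip x x) hi => a b /= -> ->. by [].
Qed.


Definition sform (f : H -> H -> R) :=
  [/\ (forall x y z, f (x + y) z = f x z + f y z),
      (forall r x z, f (r .* x) z = r * f x z) &
      (forall x y, f x y = f y x)].

Section Form.
Variable f : H -> H -> R.
Hypothesis hf : sform f.

Lemma f_addl x y z : f (x + y) z = f x z + f y z.
Proof. by case: hf. Qed.
Lemma f_scalel r x z : f (r .* x) z = r * f x z.
Proof. by case: hf. Qed.
Lemma f_sym x y : f x y = f y x.
Proof. by case: hf. Qed.
Lemma f_addr x y z : f x (y + z) = f x y + f x z.
Proof. by rewrite f_sym f_addl !(f_sym x). Qed.
Lemma f_scaler r x z : f x (r .* z) = r * f x z.
Proof. by rewrite f_sym f_scalel f_sym. Qed.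
Lemma f_0l z : f 0 z = 0.
Proof.
have h := f_addl 0 0 z; rewrite addr0 in h.
by apply: (@addrI _ (f 0 z)); rewrite addr0 -h.
Qed.
Lemma f_0r z : f z 0 = 0.
Proof. by rewrite f_sym f_0l. Qed.
Lemma f_oppl x z : f (- x) z = - f x z.
Proof.
apply: (@addrI _ (f x z)); rewrite -f_addl subrr f_0l; by rewrite subrr.
Qed.
Lemma f_oppr x z : f z (- x) = - f z x.
Proof. by rewrite f_sym f_oppl f_sym. Qed.
Lemma f_subl x y z : f (x - y) z = f x z - f y z.
Proof. by rewrite f_addl f_oppl. Qed.
Lemma f_subr x y z : f z (x - y) = f z x - f z y.
Proof. by rewrite f_addr f_oppr. Qed.

Lemma f_quad a b x y :
  f (a .* x + b .* y) (a .* x + b .* y) =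
  a ^+ 2 * f x x + 2 * a * b * f x y + b ^+ 2 * f y y.
Proof.
rewrite !f_addl !f_addr !f_scalel !f_scaler (f_sym y x). ring.
Qed.

Hypothesis fpos : forall x, 0 <= f x x.

Lemma f_cs x y : f x y ^+ 2 <= f x x * f y y.
Proof.
have Q a b : 0 <= a ^+ 2 * f x x + 2 * a * b * f x y + b ^+ 2 * f y y.
  by rewrite -f_quad.
have hy := fpos y; have hx := fpos x.
have [yy0|yy0] := eqVneq (f y y) 0.
  rewrite yy0 mulr0.
  have := Q (f x y) (- (f x x + 1) / 2); rewrite yy0.
  have -> : f x y ^+ 2 * f x x + 2 * f x y * (- (f x x + 1) / 2) * f x y +
     (- (f x x + 1) / 2) ^+ 2 * 0 = - f x y ^+ 2.
    by field.
  nra.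
have yp : 0 < f y y by rewrite lt_neqAle eq_sym yy0 hy.
have := Q (f y y) (- f x y) => h.
have h2 : 0 <= f y y * (f x x * f y y - f x y ^+ 2).
  by move: h; congr (_ <= _); ring.
nra.
Qed.
End Form.

Lemma g_sform : sform g.
Proof. by split; [exact: g_addl | exact: g_scalel | exact: g_sym]. Qed.

Lemma bound_sq (T : H -> H) (C : R) x :
  hnorm ip (T x) <= C * hnorm ip x -> g (T x) (T x) <= C ^+ 2 * g x x.
Proof.
rewrite /hnorm -/(g (T x) (T x)) -/(g x x) => h.
have a0 := sqrtr_ge0 (g (T x) (T x)); have b0 := sqrtr_ge0 (g x x).
rewrite -(sqr_sqrtr (g_ge0 (T x))) -(sqr_sqrtr (g_ge0 x)).
nra.
Qed.

Section Lin.
Context {Dm : set H} {T : H -> H}.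
Hypothesis hT : linear_on Dm T.

Lemma D0 : Dm 0. Proof. by case: hT. Qed.
Lemma Dsc a x : Dm x -> Dm (a *: x).
Proof. case: hT => h0 h1 _ hx; by have := h1 a x 0 hx h0; rewrite addr0. Qed.
Lemma DD x y : Dm x -> Dm y -> Dm (x + y).
Proof. case: hT => h0 h1 _ hx hy; by have := h1 1 x y hx hy; rewrite scale1r. Qed.
Lemma DN x : Dm x -> Dm (- x).
Proof. by move=> hx; rewrite -scaleN1r; apply: Dsc. Qed.
Lemma DB x y : Dm x -> Dm y -> Dm (x - y).
Proof. by move=> hx hy; apply: DD => //; apply: DN. Qed.
Lemma T0 : T 0 = 0.
Proof.
case: hT => h0 _ h2; have := h2 1 0 0 h0 h0; rewrite !scale1r addr0 => h.
by apply: (@addrI _ (T 0)); rewrite addr0 -h.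
Qed.
Lemma TD x y : Dm x -> Dm y -> T (x + y) = T x + T y.
Proof. case: hT => _ _ h2 hx hy; by have := h2 1 x y hx hy; rewrite !scale1r. Qed.
Lemma TZ a x : Dm x -> T (a *: x) = a *: T x.
Proof.
case: hT => h0 _ h2 hx; have := h2 a x 0 hx h0; rewrite !addr0 => ->.
by rewrite T0 addr0.
Qed.
Lemma TN x : Dm x -> T (- x) = - T x.
Proof. by move=> hx; rewrite -scaleN1r TZ // scaleN1r. Qed.
Lemma TB x y : Dm x -> Dm y -> T (x - y) = T x - T y.
Proof. by move=> hx hy; rewrite TD ?TN //; apply: DN. Qed.
End Lin.

Section Ops.
Variables (D : set H) (A B : H -> H).
Hypothesis A_lin : linear_on D A.
Hypothesis A_sym : forall x y, D x -> D y -> ip (A x) y = ip x (A y).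
Hypothesis B_lin : linear_on setT B.
Hypothesis B_sym : forall x y, ip (B x) y = ip x (B y).
Variable CB : R.
Hypothesis B_bd : forall x, hnorm ip (B x) <= CB * hnorm ip x.
Hypothesis B_pos : forall x, 0 <= g (B x) x.

Definition isinv (t s : R) (S : H -> H) :=
  [/\ linear_on setT S, (forall y, D (S y)),
      (forall y, A (S y) + t .* B (S y) - s .* S y = y) &
      (forall x, D x -> S (A x + t .* B x - s .* x) = x)].

Section Res.
Context {s : R} {Rs : H -> H}.
Hypothesis hR : isinv 0 s Rs.

Lemma Rs_lin : linear_on setT Rs. Proof. by case: hR. Qed.
Lemma Rs_D y : D (Rs y). Proof. by case: hR. Qed.
Lemma Rs_eq y : A (Rs y) - s .* Rs y = y.
Proof. case: hR => _ _ h _; by have := h y; rewrite rmorph0 scale0r addr0. Qed.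
Lemma Rs_inv x : D x -> Rs (A x - s .* x) = x.
Proof. case: hR => _ _ _ h hx; by have := h x hx; rewrite rmorph0 scale0r addr0. Qed.

Lemma Rs_sym a b : g (Rs a) b = g a (Rs b).
Proof.
rewrite -{1}(Rs_eq b) -{2}(Rs_eq a).
rewrite (@f_subr g g_sform) (@f_subl g g_sform) (@f_scaler g g_sform) (@f_scalel g g_sform).
by rewrite /g A_sym //; apply: Rs_D.
Qed.

Lemma Rs_inj y : Rs y = 0 -> y = 0.
Proof.
move=> h; rewrite -(Rs_eq y) h (T0 A_lin) scaler0 subr0 //.
Qed.
End Res.

Lemma Rs_id s s' Rs Rs' y : isinv 0 s Rs -> isinv 0 s' Rs' ->
  Rs' y - Rs y = (s' - s) .* Rs (Rs' y).
Proof.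
move=> hR hR'; set b := Rs' y.
have e1 : A b - s .* b = y + (s' - s) .* b.
  by rewrite -(Rs_eq hR' y) -/b rmorphB scalerBl addrA subrK.
have hb := Rs_inv hR _ (Rs_D hR' y); rewrite -/b e1 in hb.
rewrite (TD (Rs_lin hR)) // (TZ (Rs_lin hR)) // in hb.
by rewrite -{1}hb addrAC subrr add0r.
Qed.

Lemma B_D x : [set: H] x. Proof. by []. Qed.

Definition fB u v := g (B u) v.

Lemma fB_sform : sform fB.
Proof.
split => [x y z|r x z|x y]; rewrite /fB.
- by rewrite (TD B_lin) // (@f_addl g g_sform).
- by rewrite (TZ B_lin) // (@f_scalel g g_sform).
- by rewrite /g B_sym -/(g x (B y)) g_sym.
Qed.

Lemma N_bound x : g (B x) (B x) <= `|CB| * fB x x.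
Proof.
set N := g (B x) (B x); set p := fB x x.
have h1 : N ^+ 2 <= p * fB (B x) (B x).
  by have := @f_cs _ fB_sform B_pos x (B x).
have h2 : fB (B x) (B x) ^+ 2 <= g (B (B x)) (B (B x)) * N.
  by have := @f_cs _ g_sform g_ge0 (B (B x)) (B x).
have h3 : g (B (B x)) (B (B x)) <= CB ^+ 2 * N by apply: bound_sq.
have N0 : 0 <= N by apply: g_ge0.
have p0 : 0 <= p by apply: B_pos.
have q0 : 0 <= fB (B x) (B x) by apply: B_pos.
have c0 : 0 <= `|CB| by [].
have cc : CB ^+ 2 = `|CB| ^+ 2 by rewrite real_normK // num_real.
rewrite cc in h3.
have K0 : 0 <= `|CB| * N by apply: mulr_ge0.
have hK : fB (B x) (B x) ^+ 2 <= (`|CB| * N) ^+ 2.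
  apply: (le_trans h2); nra.
have h4 : fB (B x) (B x) <= `|CB| * N.
  by rewrite -(ler_pXn2r (n:=2)) // nnegrE.
have K1 : 0 <= `|CB| * p by apply: mulr_ge0.
have hN : N ^+ 2 <= (`|CB| * p) * N.
  apply: (le_trans h1); nra.
have [N00|Npos] := eqVneq N 0; first by rewrite N00.
have Np : 0 < N by rewrite lt_neqAle eq_sym Npos N0.
by rewrite -(ler_pM2r Np) -expr2.
Qed.

Section Key.
Variables (s : R) (Rs : H -> H) (CR : R).
Hypothesis hR : isinv 0 s Rs.
Hypothesis R_bd : forall v, hnorm ip (Rs v) <= CR * hnorm ip v.

Definition bq u v := g (Rs (B u)) (B v).

Lemma bq_sform : sform bq.
Proof.
have RL := Rs_lin hR.
split => [x y z|r x z|x y]; rewrite /bq.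
- by rewrite (TD B_lin) // (TD RL) // (@f_addl g g_sform).
- by rewrite (TZ B_lin) // (TZ RL) // (@f_scalel g g_sform).
- by rewrite (Rs_sym hR) g_sym.
Qed.

Lemma q_bound x : `|bq x x| <= `|CR| * `|CB| * fB x x.
Proof.
have h1 : bq x x ^+ 2 <= g (Rs (B x)) (Rs (B x)) * g (B x) (B x).
  by have := @f_cs _ g_sform g_ge0 (Rs (B x)) (B x).
have h2 : g (Rs (B x)) (Rs (B x)) <= CR ^+ 2 * g (B x) (B x) by apply: bound_sq.
have h3 := N_bound x.
have N0 : 0 <= g (B x) (B x) by apply: g_ge0.
have p0 : 0 <= fB x x by apply: B_pos.
have cc : CR ^+ 2 = `|CR| ^+ 2 by rewrite real_normK // num_real.
rewrite cc in h2.
have c0 : 0 <= `|CR| by [].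
have c1 : 0 <= `|CB| by [].
have qq : bq x x ^+ 2 = `|bq x x| ^+ 2 by rewrite real_normK // num_real.
rewrite qq in h1.
have a0 : 0 <= `|bq x x| by [].
have K0 : 0 <= `|CR| * g (B x) (B x) by apply: mulr_ge0.
have hK : `|bq x x| ^+ 2 <= (`|CR| * g (B x) (B x)) ^+ 2.
  apply: (le_trans h1); nra.
have h4 : `|bq x x| <= `|CR| * g (B x) (B x).
  by rewrite -(ler_pXn2r (n:=2)) // nnegrE.
apply: (le_trans h4); rewrite -mulrA; apply: ler_wpM2l => //.
Qed.

Lemma q_p0 x : fB x x = 0 -> bq x x = 0.
Proof.
move=> h; have := N_bound x; rewrite h mulr0 => h'.
have : g (B x) (B x) = 0 by apply/eqP; rewrite eq_le h' g_ge0.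
rewrite /bq; move/g_eq0 => ->. by rewrite (@f_0r g g_sform).
Qed.


Lemma fB_scale r x : fB (r .* x) (r .* x) = r ^+ 2 * fB x x.
Proof. by rewrite (@f_scalel _ fB_sform) (@f_scaler _ fB_sform) mulrA expr2. Qed.
Lemma bq_scale r x : bq (r .* x) (r .* x) = r ^+ 2 * bq x x.
Proof. by rewrite (@f_scalel _ bq_sform) (@f_scaler _ bq_sform) mulrA expr2. Qed.

Lemma q_le_Mp (M : R) :
  (forall x, fB x x <= 1 -> bq x x <= M /\ - bq x x <= M) ->
  forall x, `|bq x x| <= M * fB x x.
Proof.
move=> hM x.
have p0 : 0 <= fB x x by apply: B_pos.
have [pz|pnz] := eqVneq (fB x x) 0.
  by rewrite (q_p0 _ pz) pz mulr0 normr0.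
have pp : 0 < fB x x by rewrite lt_neqAle eq_sym pnz p0.
set r := Num.sqrt (fB x x)^-1.
have r2 : r ^+ 2 = (fB x x)^-1 by rewrite sqr_sqrtr // invr_ge0.
have : fB (r .* x) (r .* x) <= 1 by rewrite fB_scale r2 mulVf.
move/hM; rewrite bq_scale r2 => -[h1 h2].
rewrite ler_norml; apply/andP; split.
- by rewrite lerNl -ler_pdivrMr // mulNr mulrC.
- by rewrite -ler_pdivrMr // mulrC.
Qed.

Lemma polar (M : R) : (forall x, `|bq x x| <= M * fB x x) ->
  forall u v, 4 * bq u v <= 2 * M * (fB u u + fB v v).
Proof.
move=> hM u v.
have e1 := @f_quad _ bq_sform 1 1 u v.
have e2 := @f_quad _ bq_sform 1 (-1) u v.
have e3 := @f_quad _ fB_sform 1 1 u v.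
have e4 := @f_quad _ fB_sform 1 (-1) u v.
have h1 := hM (1 .* u + 1 .* v).
have h2 := hM (1 .* u + (-1) .* v).
rewrite ler_norml in h1; rewrite ler_norml in h2.
case/andP: h1 => _ h1; case/andP: h2 => h2 _.
rewrite e1 e3 in h1; rewrite e2 e4 in h2.
nra.
Qed.

Lemma pRB (M : R) : 0 < M -> (forall x, `|bq x x| <= M * fB x x) ->
  forall x, fB (Rs (B x)) (Rs (B x)) <= M ^+ 2 * fB x x.
Proof.
move=> Mp hM x; set y := Rs (B x).
have h := polar M hM (M .* x) y.
rewrite fB_scale (@f_scalel _ bq_sform) in h.
have e : bq x y = fB y y by rewrite /bq /fB -/y g_sym.
rewrite e in h.
have py0 : 0 <= fB y y by apply: B_pos.
have px0 : 0 <= fB x x by apply: B_pos.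
have h' : 2 * M * fB y y <= 2 * M * (M ^+ 2 * fB x x) by nra.
by move: h'; rewrite ler_pM2l // mulr_gt0.
Qed.

Lemma core (M sg : R) : 0 < M -> sg ^+ 2 = 1 ->
  (forall x, `|bq x x| <= M * fB x x) ->
  (forall e, 0 < e -> exists x, fB x x <= 1 /\ M - e < sg * bq x x) ->
  forall St CS, isinv (- (sg / M)) s St ->
  (forall v, hnorm ip (St v) <= CS * hnorm ip v) -> False.
Proof.
move=> Mp sg2 hM hadh St CS hS S_bd.
set K1 := `|CB|; set K := K1 ^+ 2 * CS ^+ 2.
have K10 : 0 <= K1 by apply: normr_ge0.
have K0 : 0 <= K by apply: mulr_ge0; apply: sqr_ge0.
set den := 16 * (K + M ^+ 2 + 1).
have den0 : 0 < den by rewrite mulr_gt0 // ltr_wpDl // ?addr_ge0 ?sqr_ge0.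
set e := M ^+ 3 / den.
have ep : 0 < e by rewrite divr_gt0 // exprn_gt0.
have eden : e * den = M ^+ 3 by rewrite /e mulrVK // unitfE gt_eqF.
have [x [px hx]] := hadh e ep.
set y := Rs (B x); set t := - (sg / M); set z := x + t .* y.
have Dy : D y by apply: (Rs_D hR).
have Bz : A y + t .* B y - s .* y = B z.
  rewrite addrAC (Rs_eq hR) /z (TD B_lin) // (TZ B_lin) //.
have yS : y = St (B z).
  by case: hS => _ _ _ hinv; rewrite -Bz hinv.
have gy : g y y <= CS ^+ 2 * g (B z) (B z).
  by rewrite {1 2}yS; apply: bound_sq.
have Nz : g (B z) (B z) <= K1 * fB z z := N_bound z.
have ez : z = 1 .* x + t .* y by rewrite rmorph1 scale1r.
have pz : fB z z = fB x x + 2 * t * bq x x + t ^+ 2 * fB y y.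
  rewrite ez f_quad; last exact: fB_sform.
  rewrite expr1n mul1r mulr1.
  suff -> : fB x y = bq x x by [].
  by rewrite /fB /bq -/y g_sym.
have py := pRB M Mp hM x; rewrite -/y in py.
have px0 : 0 <= fB x x by apply: B_pos.
have py0 : 0 <= fB y y by apply: B_pos.
have pz0 : 0 <= fB z z by apply: B_pos.
have gy0 : 0 <= g y y by apply: g_ge0.
have Mt : M * t = - sg by rewrite /t mulrN mulrCA divff ?gt_eqF // mulr1.
have Mpz : M ^+ 2 * fB z z = M ^+ 2 * fB x x - 2 * M * (sg * bq x x) + sg ^+ 2 * fB y y.
  have sgE : sg = - (M * t) by rewrite Mt opprK.
  rewrite pz sgE; ring.
rewrite sg2 mul1r in Mpz.
have hpz : M * fB z z <= 2 * e.
  have : M ^+ 2 * fB z z <= M * (2 * e) by nra.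
  by rewrite expr2 -mulrA ler_pM2l.
have hq : bq x x ^+ 2 <= g y y * g (B x) (B x).
  by have := @f_cs _ g_sform g_ge0 y (B x).
have Nx : g (B x) (B x) <= K1 * fB x x := N_bound x.
have N0 : 0 <= g (B x) (B x) by apply: g_ge0.
have hq2 : bq x x ^+ 2 <= g y y * K1.
  apply: (le_trans hq); apply: ler_wpM2l => //; apply: (le_trans Nx); nra.
have sq : (sg * bq x x) ^+ 2 = bq x x ^+ 2 by rewrite exprMn sg2 mul1r.
have M2 : 0 < M ^+ 2 by apply: exprn_gt0.
have eM' : 2 * e <= M.
  have e16 : e * 16 * M ^+ 2 <= M ^+ 3.
    rewrite -eden /den; nra.
  have : (2 * e) * M ^+ 2 <= M * M ^+ 2.
    have -> : M * M ^+ 2 = M ^+ 3 by rewrite exprS.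
    nra.
  by rewrite ler_pM2r.
have l1 : M ^+ 2 <= 4 * bq x x ^+ 2.
  rewrite -sq; nra.
have gz : g (B z) (B z) <= K1 * fB z z by [].
have l2 : M * g y y <= CS ^+ 2 * K1 * (2 * e).
  have : M * g y y <= M * (CS ^+ 2 * (K1 * fB z z)).
    apply: ler_wpM2l; [exact: ltW|]; apply: (le_trans gy); apply: ler_wpM2l => //; apply: sqr_ge0.
  move=> h; apply: (le_trans h).
  have c : 0 <= CS ^+ 2 * K1 by apply: mulr_ge0 => //; apply: sqr_ge0.
  have -> : M * (CS ^+ 2 * (K1 * fB z z)) = (CS ^+ 2 * K1) * (M * fB z z) by ring.
  by apply: ler_wpM2l.
have l3 : M ^+ 3 <= 8 * K * e.
  have : M * M ^+ 2 <= M * (4 * (g y y * K1)) by nra.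
  rewrite /K; nra.
have ed : e * (16 * (K + M ^+ 2 + 1)) = M ^+ 3 := eden.
have eK : 0 <= e * K by apply: mulr_ge0 => //; exact: ltW.
have eM2 : 0 <= e * M ^+ 2 by apply: mulr_ge0 => //; [exact: ltW | exact: sqr_ge0].
nra.
Qed.


Lemma key :
  (forall t, exists St CS, isinv t s St /\ forall v, hnorm ip (St v) <= CS * hnorm ip v) ->
  forall x, bq x x = 0.
Proof.
move=> hall x1; apply: contrapT => hx1.
set E1 := [set r | exists x, fB x x <= 1 /\ r = bq x x].
set E2 := [set r | exists x, fB x x <= 1 /\ r = - bq x x].
set Kb := `|CR| * `|CB|.
have bnd x : fB x x <= 1 -> `|bq x x| <= Kb.
  move=> px; apply: (le_trans (q_bound x)); rewrite /Kb -[X in _ <= X]mulr1.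
  apply: ler_wpM2l => //; apply: mulr_ge0; apply: normr_ge0.
have p00 : fB 0 0 <= 1 by rewrite (@f_0l _ fB_sform).
have hs1 : has_sup E1.
  split; first by exists (bq 0 0), 0.
  exists Kb => r [x [px ->]]; apply: le_trans (bnd x px); apply: ler_norm.
have hs2 : has_sup E2.
  split; first by exists (- bq 0 0), 0.
  exists Kb => r [x [px ->]]; apply: le_trans (bnd x px).
  by rewrite -normrN; apply: ler_norm.
set M1 := sup E1; set M2 := sup E2; set M := Num.max M1 M2.
have hM0 x : fB x x <= 1 -> bq x x <= M /\ - bq x x <= M.
  move=> px; split.
  - have u1 : bq x x <= M1 by apply: (sup_upper_bound hs1); exists x.
    by apply: (le_trans u1); rewrite le_max lexx.
  - have u1 : - bq x x <= M2 by apply: (sup_upper_bound hs2); exists x.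
    by apply: (le_trans u1); rewrite le_max lexx orbT.
have hM := q_le_Mp M hM0.
have px1 : 0 < fB x1 x1.
  rewrite lt_neqAle B_pos andbT; apply/eqP => h.
  by apply: hx1; apply: q_p0; rewrite h.
have Mp : 0 < M.
  have h := hM x1.
  have a : 0 < `|bq x1 x1| by rewrite normr_gt0; apply/eqP.
  have := lt_le_trans a h; rewrite pmulr_lgt0 //.
have [St [CS [hSt hSb]]] := hall (- ((if M2 <= M1 then 1 else -1) / M)).
move: hSt hSb; case: ifP => hle hSt hSb.
- apply: (core M 1 Mp (expr1n _ 2) hM _ St CS hSt hSb) => e ep.
  have [r [x [px ->]] hr] := sup_adherent ep hs1.
  exists x; split => //; rewrite mul1r.
  suff -> : M = M1 by [].
  by rewrite /M max_l.
- have sg2 : (-1 : R) ^+ 2 = 1 by rewrite sqrrN expr1n.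
  apply: (core M (-1) Mp sg2 hM _ St CS hSt hSb) => e ep.
  have [r [x [px ->]] hr] := sup_adherent ep hs2.
  exists x; split => //; rewrite mulN1r.
  suff -> : M = M2 by [].
  by rewrite /M max_r // ltW // ltNge hle.
Qed.

End Key.

Lemma disc s s' Rs Rs' CR x0 : isinv 0 s Rs -> isinv 0 s' Rs' ->
  (forall v, hnorm ip (Rs v) <= CR * hnorm ip v) ->
  bq Rs x0 x0 = 0 -> bq Rs' x0 x0 = 0 -> B x0 != 0 -> s != s' ->
  1 <= `|s' - s| * `|CR|.
Proof.
move=> hR hR' hb q0 q0' Bx0 ss.
set w := B x0; set u := Rs' w; set ep := s' - s.
have hid : Rs' w - Rs w = ep .* Rs u := Rs_id _ _ _ _ w hR hR'.
have ep0 : ep != 0 by rewrite subr_eq0 eq_sym.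
have h1 : ep * g (Rs u) w = 0.
  rewrite -(@f_scalel g g_sform) -hid (@f_subl g g_sform).
  by move: q0 q0'; rewrite /bq -/w => -> ->; rewrite subr0.
have h2 : g (Rs u) w = 0 by move/eqP: h1; rewrite mulf_eq0 (negbTE ep0) /= => /eqP.
have hw : Rs w = u - ep .* Rs u by rewrite -hid opprB addrC subrK.
rewrite (Rs_sym hR) hw (@f_subr g g_sform) (@f_scaler g g_sform) in h2.
have hN : g u u = ep * g u (Rs u) by apply/eqP; rewrite -subr_eq0 h2.
have hcs := @f_cs _ g_sform g_ge0 u (Rs u).
have hRb : g (Rs u) (Rs u) <= CR ^+ 2 * g u u by apply: bound_sq.
have N0 : 0 <= g u u by apply: g_ge0.
have [Nz|Nnz] := eqVneq (g u u) 0.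
  exfalso; move/g_eq0: Nz => /(Rs_inj hR') hw0.
  by move: Bx0; rewrite -/w hw0 eqxx.
have Np : 0 < g u u by rewrite lt_neqAle eq_sym Nnz N0.
have c1 : (g u u) ^+ 2 <= ep ^+ 2 * CR ^+ 2 * (g u u) ^+ 2.
  rewrite {1}hN exprMn -mulrA; apply: ler_wpM2l; first exact: sqr_ge0.
  apply: (le_trans hcs); rewrite mulrC expr2 mulrA; apply: ler_wpM2r => //.
have c2 : 1 <= ep ^+ 2 * CR ^+ 2.
  by move: c1; rewrite -{1}[g u u ^+ 2]mul1r ler_pM2r // exprn_gt0.
have ea : ep ^+ 2 * CR ^+ 2 = (`|ep| * `|CR|) ^+ 2.
  by rewrite exprMn !real_normK // num_real.
rewrite ea in c2.
have a0 : 0 <= `|ep| * `|CR| by apply: mulr_ge0; apply: normr_ge0.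
by rewrite -(ler_pXn2r (n:=2)) // ?nnegrE // expr1n.
Qed.

Lemma main_count (x0 : H) (Sset : set R) : B x0 != 0 ->
  (forall s, Sset s -> forall t, exists St CS,
     isinv t s St /\ forall v, hnorm ip (St v) <= CS * hnorm ip v) ->
  countable Sset.
Proof.
move=> Bx0 hS.
have hdel s : exists d : R, Sset s -> 0 < d /\ forall s', Sset s' -> s' != s -> d <= `|s' - s|.
  case: (pselect (Sset s)) => Ss; last by exists 0.
  have [Rs [CR [hR hRb]]] := hS s Ss 0.
  have q0 := key s Rs CR hR hRb (hS s Ss) x0.
  exists (1 / (`|CR| + 1)) => _; split; first by rewrite divr_gt0 // ltr_wpDl.
  move=> s' Ss' ne.
  have [Rs' [CR' [hR' hRb']]] := hS s' Ss' 0.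
  have q0' := key s' Rs' CR' hR' hRb' (hS s' Ss') x0.
  have h := disc _ _ _ _ _ _ hR hR' hRb q0 q0' Bx0.
  have h1 := h ltac:(by rewrite eq_sym).
  rewrite ler_pdivrMr ?ltr_wpDl //.
  by apply: (le_trans h1); apply: ler_wpM2l => //; rewrite lerDl.
have [del hdel'] := choice hdel.
have hq s : exists q : rat, Sset s -> ratr q \in `](s - del s / 2), (s + del s / 2)[.
  case: (pselect (Sset s)) => Ss; last by exists 0.
  have [dp _] := hdel' s Ss.
  have [q hq] := @rat_in_itvoo R (s - del s / 2) (s + del s / 2) ltac:(lra).
  by exists q.
have [Q hQ] := choice hq.
apply/countable_injP; exists (fun s => pickle (Q s)) => s s' Ss Ss' e.
move/(pcan_inj pickleK): e => e.
move: Ss Ss'; rewrite !in_setE => Ss Ss'.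
apply: contrapT => ne.
have [dp hd] := hdel' s Ss; have [dp' hd'] := hdel' s' Ss'.
have h1 := hd s' Ss' (introN eqP (fun h => ne (esym h))).
have h2 := hd' s Ss (introN eqP ne).
have i1 := hQ s Ss; have i2 := hQ s' Ss'.
rewrite e in i1.
move: i1 i2; rewrite !in_itv /= => /andP[a1 b1] /andP[a2 b2].
move: h1 h2; rewrite !ler_normr !opprB => /orP[c1|c1] /orP[c2|c2].
all: move: a1 b1 a2 b2 c1 c2 dp dp'; generalize (ratr (Q s') : R) (del s) (del s') => r d d'.
all: lra.
Qed.
End Ops.
End Basics.

Theorem lemma2p7 (R : realType) (H : lmodType R[i]) (ip : H -> H -> R[i])
  (hH : hilbert_space ip) (D : set H) (A B : H -> H)
  (hA : selfadjoint ip D A)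
  (hBsa : selfadjoint ip setT B) (hBb : bounded_op ip B)
  (hBpos : nonneg_op ip B) (hB0 : exists x, B x != 0) :
  countable [set s : R | forall t : R,
     ~ spectrum ip D (fun x => A x + (Complex t 0) *: B x) (Complex s 0)].
Proof.
move: hH => [ip_lin ip_sym ip_pos ip_def _].
case: hA => A_lin _ A_sa.
case: hBsa => B_lin _ B_sa.
case: hBb => _ [CB hCB].
case: hB0 => x0 hx0.
apply: (@main_count R H ip ip_lin ip_sym ip_pos ip_def D A B A_lin _ B_lin _ CB hCB _ x0 _ hx0).
- move=> x y Dx Dy; by apply: (proj2 (A_sa y (A y)) (conj Dy erefl)).
- move=> x y; apply: (proj2 (B_sa y (B y))); by split.
- move=> x; have := hBpos x; rewrite lecE => /andP[_ h]; exact h.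
- move=> s Ss t; have := Ss t; rewrite /spectrum /= => /contrapT [S [[SL [C hC]] SD Seq Sinv]].
  by exists S, C; split.
Qed.
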